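(* Let $R$ be a commutative ring with unit, let $G=(V,E)$ be a finite transitive digraph, and let $f:V\to[0,+\infty)$ be any discrete Morse function on $G$. Take as basis $B_n(G)$ of $\Omega_n(G)$ the set of allowed elementary $n$-paths of $G$, and let $\mathcal M=\mathcal M(G,f)$. Then the chain complex $(\Omega_*(G),\partial_* )$ decomposes as a direct sum of chain complexes $$\Omega_*(G)\cong C^{\mathcal M}_*(B_*(G))\ \oplus\ \bigoplus_{(a,b)\in\mathcal M}\mathrm{Atom}(\dim b),$$ and for each $n\ge 0$, $$H_n(\{\Omega_*(G),\partial_*\};R)\cong H_n(\{C^{\mathcal M}_*(B_*(G)),\partial^{\mathcal M}_*\};R).$$
   Context: A digraph $G=(V,E)$ consists of a set $V$ of vertices and a set $E\subseteq (V\times V)\setminus\{(v,v):v\in V\}$ of directed edges; $(u,v)\in E$ is written $u\to v$. $G$ is transitive if whenever $u\to v$ and $v\to w$ are edges, $u\to w$ is an edge. An allowed elementary $n$-path ($n\ge0$) is a sequence $v_0v_1\cdots v_n$ of vertices with $v_{i-1}\to v_i\in E$ for $1\le i\le n$ (vertices may repeat non-consecutively). For allowed elementary paths write $\gamma'<\gamma$ (or $\gamma>\gamma'$) if $\gamma'$ is obtained from $\gamma$ by deleting some of its entries. For $n\ge0$, $\Lambda_n(V)$ is the free $R$-module on sequences $v_0\cdots v_n$ of vertices with $v_{i-1}\ne v_i$ for all $i$, and $\partial_n=\sum_{i=0}^n(-1)^id_i$, where $d_i$ deletes the entry $v_i$ and a resulting sequence with two equal consecutive entries is taken to be $0$. $P_n(G)\subseteq\Lambda_n(V)$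 is the submodule spanned by allowed elementary $n$-paths and $\Omega_n(G)=\{x\in P_n(G):\partial_nx\in P_{n-1}(G)\}$; $(\Omega_*(G),\partial_* )$ is a chain complex whose homology is the path homology of $G$. (For transitive $G$, $\Omega_n(G)=P_n(G)$.) A map $f:V\to[0,+\infty)$ is a discrete Morse function on $G$ if for every allowed elementary path $v_0\cdots v_n$: (i) there is at most one index $0\le i\le n$ with $f(v_i)=0$ such that $v_0\cdots v_{i-1}v_{i+1}\cdots v_n$ is an allowed elementary $(n-1)$-path; (ii) there is at most one vertex $u$ with $f(u)=0$ such that for some $-1\le j\le n$ the sequence $v_0\cdots v_juv_{j+1}\cdots v_n$ (meaning $uv_0\cdots v_n$ if $j=-1$ and $v_0\cdots v_nu$ if $j=n$) is an allowed elementary $(n+1)$-path. For an allowed elementary path set $f(v_0\cdots v_n)=\sum_i f(v_i)$. $\mathcal M(G,f)$ is the set of all pairs $(\alpha,\beta)$ where $\alpha$ is an allowed elementary $n$-path and $\beta$ an allowed elementary $(n+1)$-path for some $n\ge0$, $\alpha<\beta$ and $f(\alpha)=f(\beta)$. Morse complex: for $b\in B_n(G)$, $a\in B_{n-1}(G)$ let $\langle\partial b,a\rangle$ be the coefficient of $a$ in $\partial_n b$; write $b\succ a$ if $\langle\partial b,a\rangle\neq0$. Let $\mathcal C(B_n(G))$ be the set of elements of $B_n(G)$ lying in no pair of $\mathcal M$. An alternating path $p$ from $b\in B_n(G)$ to $a\in B_{n-1}(G)$ is a sequence $b\succ a_1,\ (a_1,b_1)\in\mathcal M,\ b_1\succ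 a_2,\ (a_2,b_2)\in\mathcal M,\dots,(a_k,b_k)\in\mathcal M,\ b_k\succ a$ ($k\ge0$); put $p^\bullet=b$, $p_\bullet=a$ and $m(p)=(-1)^k\frac{\langle\partial b,a_1\rangle\langle\partial b_1,a_2\rangle\cdots\langle\partial b_k,a\rangle}{\langle\partial b_1,a_1\rangle\cdots\langle\partial b_k,a_k\rangle}$ (the denominators are inverted in $R$). The Morse complex $C^{\mathcal M}_n(B_*(G))$ is the free $R$-module on $\mathcal C(B_n(G))$ with $\partial^{\mathcal M}_n(b)=\sum_p m(p)\,p_\bullet$, summed over alternating paths $p$ with $p^\bullet=b$ and $p_\bullet\in\mathcal C(B_{n-1}(G))$. $\mathrm{Atom}(d)$ denotes the chain complex with $R$ in degrees $d$ and $d-1$, zero elsewhere, and identity differential. *)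

(* Defs.v *)
From HB Require Import structures.
From mathcomp Require Import all_boot all_order all_algebra.
From mathcomp Require Import Rstruct.
Set Implicit Arguments.
Unset Strict Implicit.
Unset Printing Implicit Defensive.
Import Order.TTheory GRing.Theory Num.Theory.
Local Open Scope ring_scope.

Notation Real := Rdefinitions.R.

Section PathHomology.
Variables (V : finType) (E : rel V).

Definition allowed (s : seq V) : bool :=
  if s is x :: s' then path E x s' else false.

Definition delete (i : nat) (s : seq V) : seq V := take i s ++ drop i.+1 s.
Definition insert (k : nat) (u : V) (s : seq V) : seq V := take k s ++ u :: drop k s.

Definition APath (n : nat) := {t : n.+1.-tuple V | allowed t}.
Definition ps n (a : APath n) : seq V := val (val a).

(** <d b, a> : coefficient of a in the boundary of b, for b an (m+1)-path
    and a an m-path: sum of (-1)^i over the i with d_i b = a (a deletion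
    producing two equal consecutive entries gives 0 and never equals an
    allowed path since E is irreflexive). *)
Definition coef (R : ringType) m (b : APath m.+1) (a : APath m) : R :=
  \sum_(i < m.+2 | delete i (ps b) == ps a) (-1) ^+ i.

(** Omega_n(G) = P_n(G) (G transitive): free module on B_n(G) *)
Definition Om (R : ringType) (n : nat) := {ffun APath n -> R^o}.

Definition dOm_succ (R : ringType) m (x : Om R m.+1) : Om R m :=
  [ffun a => \sum_(b : APath m.+1) x b * coef R b a].

Definition dOm (R : ringType) (n : nat) : Om R n -> Om R n.-1 :=
  match n return Om R n -> Om R n.-1 with
  | 0 => fun _ => 0
  | m.+1 => @dOm_succ R m
  end.

Definition MorseFn (f : V -> Real) : Prop :=
  (forall n (t : n.+1.-tuple V), allowed t ->
     forall i j : 'I_n.+1,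
       f (tnth t i) = 0 -> allowed (delete i t) ->
       f (tnth t j) = 0 -> allowed (delete j t) -> i = j) /\
  (forall n (t : n.+1.-tuple V), allowed t ->
     forall u u' : V,
       f u = 0 -> (exists k, (k <= n.+1)%N /\ allowed (insert k u t)) ->
       f u' = 0 -> (exists k, (k <= n.+1)%N /\ allowed (insert k u' t)) ->
       u = u').

Variable f : V -> Real.

Definition fval (s : seq V) : Real := \sum_(v <- s) f v.

Definition Mb m (a : APath m) (b : APath m.+1) : bool :=
  subseq (ps a) (ps b) && (fval (ps a) == fval (ps b)).

Definition matched_down n : APath n -> bool :=
  match n return APath n -> bool with
  | 0 => fun _ => false
  | m.+1 => fun b => [exists a : APath m, Mb a b]
  end.
Definition critb n (b : APath n) : bool :=
  ~~ matched_down b && ~~ [exists c : APath n.+1, Mb b c].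
Definition Crit n := {b : APath n | critb b}.

Section MorseDiff.
Variables (R : comUnitRingType) (m : nat).

(** alternating paths from b (degree m+1) to a (degree m), encoded by the
    list of matched pairs (a_1,b_1),...,(a_k,b_k).  [alt_ok b pa t] checks
    b > a_1, (a_1,b_1) in M, b_1 > a_2 with a_2 <> a_1, ..., b_k > a
    (with a <> a_k); pa is the previous a_i. *)
Fixpoint alt_ok (a : APath m) (b : APath m.+1) (pa : option (APath m))
    (t : seq (APath m * APath m.+1)) : bool :=
  match t with
  | [::] => (coef R b a != 0) && (Some a != pa)
  | (ai, bi) :: t' =>
      [&& coef R b ai != 0, Some ai != pa, Mb ai bi & alt_ok a bi (Some ai) t']
  end.

Fixpoint alt_weight (a : APath m) (b : APath m.+1)
    (t : seq (APath m * APath m.+1)) : R :=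
  match t with
  | [::] => coef R b a
  | (ai, bi) :: t' =>
      - (coef R b ai * (coef R bi ai)^-1) * alt_weight a bi t'
  end.

(** Paths are taken
    with pairwise distinct b_i (every alternating path is of this form when
    M is acyclic, which makes the sum finite); their length is then at most
    #|B_{m+1}|. *)
Definition morse_coef (b : APath m.+1) (a : APath m) : R :=
  \sum_(k < #|{: APath m.+1}|.+1)
    \sum_(t : k.-tuple (APath m * APath m.+1)
          | uniq (map snd t) && alt_ok a b None t)
      alt_weight a b t.

Definition CM_succ_d (x : {ffun Crit m.+1 -> R}) : {ffun Crit m -> R} :=
  [ffun a => \sum_(b : Crit m.+1) x b * morse_coef (val b) (val a)].
End MorseDiff.

Definition CM (R : comUnitRingType) (n : nat) := {ffun Crit n -> R^o}.
Definition dCM (R : comUnitRingType) (n : nat) : CM R n -> CM R n.-1 :=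
  match n return CM R n -> CM R n.-1 with
  | 0 => fun _ => 0
  | m.+1 => @CM_succ_d R m
  end.

(** bigoplus_{(a,b) in M} Atom(dim b): each pair p = (a,b) with dim b = d
    contributes a generator "top p" in degree d and "bot p" in degree d-1,
    with differential top p |-> bot p. *)
Definition MPair m := {p : APath m * APath m.+1 | Mb p.1 p.2}.
Definition topT (n : nat) : finType :=
  match n with 0 => void | m.+1 => MPair m end.
Definition At (R : ringType) (n : nat) := {ffun (topT n + MPair n)%type -> R^o}.
Definition dAt_succ (R : ringType) m (x : At R m.+1) : At R m :=
  [ffun j => match j with inl _ => 0 | inr p => x (inl p) end].
Definition dAt (R : ringType) (n : nat) : At R n -> At R n.-1 :=
  match n return At R n -> At R n.-1 with
  | 0 => fun _ => 0
  | m.+1 => @dAt_succ R m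
  end.

Definition SumCx (R : comUnitRingType) (n : nat) := (CM R n * At R n)%type.
Definition dSum (R : comUnitRingType) (n : nat) (x : SumCx R n) : SumCx R n.-1 :=
  (dCM x.1, dAt x.2).

End PathHomology.

Section Complexes.
Variable R : ringType.

Definition complex_iso (C D : nat -> lmodType R)
    (dC : forall n, C n -> C n.-1) (dD : forall n, D n -> D n.-1) : Prop :=
  exists phi : forall n, C n -> D n,
    (forall n a x y, phi n (a *: x + y) = a *: phi n x + phi n y) /\
    (forall n, bijective (phi n)) /\
    (forall n x, phi n.-1 (dC n x) = dD n (phi n x)).

Definition cycle_ (C : nat -> lmodType R) (d : forall n, C n -> C n.-1) n
  (x : C n) : Prop := d n x = 0.
Definition bdry (C : nat -> lmodType R) (d : forall n, C n -> C n.-1) n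
  (x : C n) : Prop := exists y : C n.+1, d n.+1 y = x.

(** An R-linear bijection
    theta : Z_n(C)/B_n(C) -> Z_n(D)/B_n(D) is described by a representative
    lift F (theta [x] = [F x]): F maps cycles to cycles, is additive and
    R-homogeneous modulo boundaries (so theta is well defined and linear),
    F x is a boundary iff x is (theta injective), and every class of D is
    hit (theta surjective).  By choice every isomorphism has such a lift. *)
Definition homology_iso (C D : nat -> lmodType R)
    (dC : forall n, C n -> C n.-1) (dD : forall n, D n -> D n.-1) (n : nat) : Prop :=
  exists F : C n -> D n,
    (forall x, cycle_ dC x -> cycle_ dD (F x)) /\
    (forall x y, cycle_ dC x -> cycle_ dC y -> bdry dD (F (x + y) - (F x + F y))) /\
    (forall a x, cycle_ dC x -> bdry dD (F (a *: x) - a *: F x)) /\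
    (forall x, cycle_ dC x -> (bdry dC x <-> bdry dD (F x))) /\
    (forall y, cycle_ dD y -> exists2 x, cycle_ dC x & bdry dD (y - F x)).
End Complexes.

Definition OmC (V : finType) (E : rel V) (R : ringType) : nat -> lmodType R :=
  fun n => {ffun APath E n -> R^o}.
Definition CMC (V : finType) (E : rel V) (f : V -> Real) (R : comUnitRingType)
  : nat -> lmodType R := fun n => {ffun Crit E f n -> R^o}.
Definition SumC (V : finType) (E : rel V) (f : V -> Real) (R : comUnitRingType)
  : nat -> lmodType R := fun n =>
    ({ffun Crit E f n -> R^o} * {ffun (topT E f n + MPair E f n)%type -> R^o})%type.

(* Main.v *)
Require Import Defs.
From HB Require Import structures.
From mathcomp Require Import all_boot all_order all_algebra.
From mathcomp Require Import Rstruct.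
Import Order.TTheory GRing.Theory Num.Theory.
Local Open Scope ring_scope.
Set Implicit Arguments.
Unset Strict Implicit.
Unset Printing Implicit Defensive.


Section SeqLemmas.
Variable T : finType.
Implicit Types (s q : seq T) (x u : T).

Lemma delete0 x s : delete 0 (x :: s) = s.
Proof. by rewrite /delete /= drop0. Qed.

Lemma deleteS i x s : delete i.+1 (x :: s) = x :: delete i s.
Proof. by rewrite /insert /delete. Qed.

Lemma insert0 u s : insert 0 u s = u :: s.
Proof. by rewrite /insert take0 drop0. Qed.

Lemma insertS i u x s : insert i.+1 u (x :: s) = x :: insert i u s.
Proof. by rewrite /insert /delete. Qed.

Lemma size_delete i s : (i < size s)%N -> size (delete i s) = (size s).-1.
Proof.
elim: s i => [|x s IH] [|i] //; first by rewrite delete0.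
rewrite deleteS /= ltnS => lt; rewrite IH // prednK //; exact: leq_ltn_trans (leq0n i) lt.
Qed.

Lemma delete_subseq i s : subseq (delete i s) s.
Proof.
elim: s i => [|x s IH] [|i] //; first by rewrite delete0 subseq_cons.
by rewrite deleteS /= eqxx IH.
Qed.

Lemma mem_delete x0 i s x : uniq s -> (i < size s)%N ->
  (x \in delete i s) = (x \in s) && (x != nth x0 s i).
Proof.
elim: s i => [|y s IH] [|i] // /andP[ys us] lt.
  rewrite delete0 in_cons /=; case: eqP => [->|_] /=.
    by rewrite (negbTE ys).
  by rewrite andbT.
rewrite deleteS !in_cons IH //; case: eqP => [->|_] //=.
apply/esym/negP => /eqP E; by rewrite E mem_nth in ys.
Qed.

Lemma delete_inj s i j : uniq s -> (i < size s)%N -> (j < size s)%N ->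
  delete i s = delete j s -> i = j.
Proof.
case: s => [//|x0 s'] us lti ltj E; apply/eqP; case: (boolP (i == j)) => // nij.
have: nth x0 (x0 :: s') j \in delete i (x0 :: s').
  by rewrite (mem_delete x0) // mem_nth //= nth_uniq // eq_sym.
by rewrite E (mem_delete x0) // eqxx andbF.
Qed.

Lemma insert_delete x0 i s : (i < size s)%N -> insert i (nth x0 s i) (delete i s) = s.
Proof.
elim: s i => [|x s IH] [|i] //; first by rewrite delete0 insert0.
by move=> lt; rewrite deleteS insertS IH.
Qed.

Lemma subseq_delete s1 s2 : subseq s1 s2 -> size s2 = (size s1).+1 ->
  exists2 i, (i < size s2)%N & s1 = delete i s2.
Proof.
elim: s2 s1 => [|y s2 IH] [|x s1] //=.
- by move=> _ [] /size0nil ->; exists 0%N => //; rewrite delete0.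
- case: eqP => [-> | _] sub [sz].
    by have [i lt ->] := IH _ sub sz; exists i.+1.
  exists 0%N => //; rewrite delete0; have [_] := size_subseq_leqif sub.
  by rewrite /= sz eqxx => /esym/eqP ->.
Qed.

Lemma delete_comm s i j : (j < i)%N ->
  delete j (delete i s) = delete i.-1 (delete j s).
Proof.
elim: s i j => [|x s IH] i j lt; first by [].
case: j lt => [|j]; case: i => [|i] //= lt.
  by rewrite deleteS delete0 delete0.
case: i lt => [//|i] lt.
by rewrite !deleteS IH.
Qed.

Lemma ins_uniq (e : rel T) : transitive e -> irreflexive e ->
  forall i j u s, sorted e (insert i u s) -> sorted e (insert j u s) ->
  (i <= size s)%N -> (j <= size s)%N -> i = j.
Proof.
move=> tr irr.
suff H: forall i u s, sorted e (insert i u s) -> (i <= size s)%N ->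
    count (fun x => e x u) s = i.
  by move=> i j u s si sj li lj; rewrite -(H _ _ _ si li) -(H _ _ _ sj lj).
move=> i u s; rewrite /insert (sorted_pairwise tr) pairwise_cat allrel_consr.
case/and3P=> /andP[a1 _] _; rewrite pairwise_cons => /andP[a2 _] li.
rewrite -[s in count _ s](cat_take_drop i) count_cat.
have -> : count (fun x => e x u) (take i s) = size (take i s).
  by apply/eqP; rewrite -all_count.
have -> : count (fun x => e x u) (drop i s) = 0%N.
  apply/eqP; rewrite -leqn0 leqNgt -has_count; apply/hasP => -[x xin exu].
  by move/allP: a2 => /(_ x xin) eux; move: (tr _ _ _ eux exu); rewrite irr.
by rewrite addn0 size_take_min; apply/minn_idPl.
Qed.
End SeqLemmas.

Section DD.
Variable (R : ringType) (T : finType).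
Lemma dd_sum (s q : seq T) (N : nat) :
  \sum_(0 <= i < N.+1) \sum_(0 <= j < N)
     ((delete j (delete i s) == q)%:R * (-1) ^+ (i + j) : R) = 0.
Proof.
set G := fun i j => ((delete j (delete i s) == q)%:R * (-1) ^+ (i + j) : R).
have split : forall i j, G i j = (if (j < i)%N then G i j else 0) +
                                  (if (i <= j)%N then G i j else 0).
  by move=> i j; rewrite ltnNge; case: leqP; rewrite ?addr0 ?add0r.
rewrite (eq_bigr (fun i => \sum_(0 <= j < N) (if (j < i)%N then G i j else 0) +
                        \sum_(0 <= j < N) (if (i <= j)%N then G i j else 0))); last first.
  by move=> i _; rewrite -big_split /=; apply: eq_bigr => j _; rewrite -split.
rewrite big_split /= big_nat_recl // big_nat_recr //=.
rewrite big1 ?add0r; last by move=> j _.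
rewrite [X in _ + (_ + X)]big_nat_cond [X in _ + (_ + X)]big1 ?addr0; last first.
  by move=> j /andP[/andP[_ lt] _]; rewrite leqNgt lt.
have -> : \sum_(0 <= i < N) \sum_(0 <= j < N) (if (j < i.+1)%N then G i.+1 j else 0)
   = - \sum_(0 <= i < N) \sum_(0 <= j < N) (if (j <= i)%N then G j i else 0).
  rewrite -sumrN; apply: eq_bigr => i _; rewrite -sumrN; apply: eq_bigr => j _.
  rewrite ltnS; case: leqP => ji; last by rewrite oppr0.
  rewrite /G delete_comm ?ltnS //= addSn exprS mulN1r mulrN addnC //.
by rewrite exchange_big /= addNr.
Qed.
End DD.


Section Comb.
Variables (V : finType) (E : rel V) (f : V -> Real).
Hypotheses (irrE : irreflexive E) (trE : transitive E) (MF : MorseFn E f).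

Lemma allowed_sorted s : allowed E s = (s != [::]) && sorted E s.
Proof. by case: s. Qed.

Lemma uniq_allowed s : allowed E s -> uniq s.
Proof. by rewrite allowed_sorted => /andP[_]; apply: sorted_uniq. Qed.

Lemma uniq_ps n (a : APath E n) : uniq (ps a).
Proof. exact: (uniq_allowed (valP a)). Qed.

Lemma size_ps n (a : APath E n) : size (ps a) = n.+1.
Proof. by rewrite /ps size_tuple. Qed.

Lemma ps_inj n (a b : APath E n) : ps a = ps b -> a = b.
Proof. by move=> H; apply/val_inj/val_inj. Qed.

Lemma allowed_delete s i : (1 < size s)%N -> (i < size s)%N -> allowed E s ->
  allowed E (delete i s).
Proof.
move=> s1 lt; rewrite !allowed_sorted => /andP[_ so].
rewrite (subseq_sorted trE (delete_subseq i s) so) andbT -size_eq0 size_delete //.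
by rewrite -lt0n -ltnS prednK // (ltn_trans _ s1).
Qed.

Lemma fval_delete x0 s i : (i < size s)%N ->
  fval f s = fval f (delete i s) + f (nth x0 s i).
Proof.
move=> lt; rewrite -{1}(cat_take_drop i s) (drop_nth x0 lt) /fval /delete.
by rewrite !big_cat big_cons /= [f _ + _]addrC addrA.
Qed.

Lemma Mb_del m (a : APath E m) (b : APath E m.+1) : Mb f a b ->
  exists i : 'I_m.+2, ps a = delete i (ps b) /\ f (tnth (val b) i) = 0.
Proof.
case/andP=> sub /eqP fe.
have sz : size (ps b) = (size (ps a)).+1 by rewrite !size_ps.
have [i lt ea] := subseq_delete sub sz.
rewrite size_ps in lt; exists (Ordinal lt); split => //.
have lt' : (i < size (ps b))%N by rewrite size_ps.
have x0 := tnth (val b) (Ordinal lt).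
have := @fval_delete x0 (ps b) i lt'.
rewrite -ea -fe => H.
rewrite (tnth_nth x0) /=.
by apply: (@addrI _ (fval f (ps a))); rewrite addr0; symmetry; exact: H.
Qed.

Lemma twoz m (b : APath E m.+1) (j : 'I_m.+2) x :
  x \in delete j (ps b) -> f x = 0 -> f (tnth (val b) j) = 0 -> False.
Proof.
have x0 := tnth (val b) j.
rewrite (mem_delete x0) ?uniq_ps ?size_ps // => /andP[xin xne] fx fj.
have lt : (index x (ps b) < m.+2)%N by rewrite -(size_ps b) index_mem.
have := (proj1 MF) m.+1 (val b) (valP b) (Ordinal lt) j.
rewrite (tnth_nth x0) /= nth_index // => /(_ fx).
have al : forall k : 'I_m.+2, allowed E (delete k (val b)).
  by move=> k; apply: allowed_delete; rewrite ?size_tuple //; exact: (valP b).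
move=> /(_ (al (Ordinal lt)) fj (al j)) ej.
by move: xne; rewrite -(nth_index x0 xin) /ps -/(nat_of_ord (Ordinal lt)) ej
  -tnth_nth eqxx.
Qed.

Lemma coef_nz (R : ringType) m (b : APath E m.+1) (a : APath E m) :
  coef R b a != 0 -> exists j : 'I_m.+2, delete j (ps b) = ps a.
Proof.
move=> nz; case: (pickP (fun j : 'I_m.+2 => delete j (ps b) == ps a)).
  by move=> j /eqP; exists j.
by move=> H; move: nz; rewrite /coef big_pred0 ?eqxx.
Qed.

Lemma cross (R : ringType) m (a a' : APath E m) (b b' : APath E m.+1) :
  Mb f a b -> Mb f a' b' -> coef R b' a != 0 -> a = a'.
Proof.
move=> Mab Mab' /coef_nz [j ej].
have [i [ea fi]] := Mb_del Mab; have [i' [ea' fi']] := Mb_del Mab'.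
case: (eqVneq j i') => [ji|nji].
  by apply: ps_inj; rewrite -ej ea' ji.
have x0 := tnth (val b') i'.
have : tnth (val b') i' \in ps a.
  rewrite -ej (mem_delete x0) ?uniq_ps ?size_ps // mem_tnth /= (tnth_nth x0).
  by rewrite nth_uniq ?size_ps ?uniq_ps // eq_sym.
rewrite ea => /twoz /(_ fi' fi) [].
Qed.

Lemma up_uniq m (a : APath E m) (b b' : APath E m.+1) :
  Mb f a b -> Mb f a b' -> b = b'.
Proof.
move=> Mab Mab'; have [i [ea fi]] := Mb_del Mab; have [i' [ea' fi']] := Mb_del Mab'.
have x0 := tnth (val b) i.
have eb : ps b = insert i (tnth (val b) i) (ps a).
  by rewrite ea (tnth_nth x0) insert_delete ?size_ps.
have eb' : ps b' = insert i' (tnth (val b') i') (ps a).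
  by rewrite ea' (tnth_nth x0) insert_delete ?size_ps.
have eu : tnth (val b) i = tnth (val b') i'.
  apply: ((proj2 MF) m (val a) (valP a)) => //.
    by exists i; split; [rewrite -ltnS | rewrite -[insert _ _ _]eb; exact: (valP b)].
  by exists i'; split; [rewrite -ltnS | rewrite -[insert _ _ _]eb'; exact: (valP b')].
have so : forall c : APath E m.+1, sorted E (ps c).
  by move=> c; have := valP c; rewrite allowed_sorted => /andP[].
have ii : (i : nat) = i'.
  apply: (ins_uniq trE irrE (u := tnth (val b) i) (s := ps a)).
  - by rewrite -eb.
  - by rewrite eu -eb'.
  - by rewrite size_ps -ltnS.
  - by rewrite size_ps -ltnS.
by apply: ps_inj; rewrite eb eb' eu ii.
Qed.

Lemma down_uniq m (a a' : APath E m) (b : APath E m.+1) :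
  Mb f a b -> Mb f a' b -> a = a'.
Proof.
move=> Mab Mab'; have [i [ea fi]] := Mb_del Mab; have [i' [ea' fi']] := Mb_del Mab'.
have al : forall k : 'I_m.+2, allowed E (delete k (val b)).
  by move=> k; apply: allowed_delete; rewrite ?size_tuple //; exact: (valP b).
have := (proj1 MF) m.+1 (val b) (valP b) i i' fi (al _) fi' (al _).
by move=> ii; apply: ps_inj; rewrite ea ea' ii.
Qed.

Lemma no_chain m (a : APath E m) (b : APath E m.+1) (c : APath E m.+2) :
  Mb f a b -> Mb f b c -> False.
Proof.
move=> Mab Mbc; have [i [ea fi]] := Mb_del Mab; have [j [eb fj]] := Mb_del Mbc.
have : tnth (val b) i \in ps b by exact: mem_tnth.
by rewrite eb => /twoz /(_ fi fj).
Qed.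

Lemma coef_unit (R : unitRingType) m (a : APath E m) (b : APath E m.+1) :
  Mb f a b -> coef R b a \is a GRing.unit.
Proof.
move=> Mab; have [i [ea _]] := Mb_del Mab.
rewrite /coef (big_pred1 i); first by rewrite unitrX ?unitrN1.
move=> k /=; rewrite ea; apply/eqP/eqP => [|->] //.
by move/(delete_inj (uniq_ps b)); rewrite !size_ps => /(_ (ltn_ord k) (ltn_ord i)) /val_inj.
Qed.

End Comb.


Section Lin.
Variables (V : finType) (E : rel V) (f : V -> Real) (R : comUnitRingType).
Hypotheses (irrE : irreflexive E) (trE : transitive E) (MF : MorseFn E f).

Local Notation AP := (APath E).
Local Notation MP := (MPair E f).
Local Notation OM := (Om E R).

Lemma OmD n (x z : OM n) y : (x + z) y = x y + z y. Proof. by rewrite ffunE. Qed.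
Lemma OmN n (x : OM n) y : (- x) y = - x y. Proof. by rewrite ffunE. Qed.
Lemma OmB n (x z : OM n) y : (x - z) y = x y - z y. Proof. by rewrite !ffunE. Qed.
Lemma OmZ n a (x : OM n) y : (a *: x) y = a * x y. Proof. by rewrite ffunE. Qed.
Lemma Om0 n (y : AP n) : (0 : OM n) y = 0. Proof. by rewrite ffunE. Qed.
Lemma OmS n (I : finType) (P : pred I) (F : I -> OM n) y :
  (\sum_(i | P i) F i) y = \sum_(i | P i) F i y.
Proof. exact: sum_ffunE. Qed.

Definition delta n (b : AP n) : OM n := [ffun y => (y == b)%:R].

Lemma deltaE n (b y : AP n) : delta b y = (y == b)%:R.
Proof. by rewrite ffunE. Qed.

Lemma sum_delta n (b : AP n) (F : AP n -> R) : \sum_y (y == b)%:R * F y = F b.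
Proof.
rewrite (bigD1 b) //= eqxx mul1r big1 ?addr0 // => y /negbTE ->.
by rewrite mul0r.
Qed.

Lemma d1E m (x : OM m.+1) y : dOm_succ x y = \sum_b x b * coef R b y.
Proof. by rewrite ffunE. Qed.

Lemma d1_delta m (b : AP m.+1) y : dOm_succ (delta b) y = coef R b y.
Proof.
rewrite d1E -(sum_delta b (fun b' => coef R b' y)).
by apply: eq_bigr => b' _; rewrite deltaE.
Qed.

Lemma d1_lin m a (x z : OM m.+1) :
  dOm_succ (a *: x + z) = a *: dOm_succ x + dOm_succ z.
Proof.
apply/ffunP => y; rewrite OmD OmZ !d1E big_distrr -big_split.
by apply: eq_bigr => b _ /=; rewrite OmD OmZ mulrDl mulrA.
Qed.

Lemma d1_0 m : dOm_succ (0 : OM m.+1) = 0.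
Proof. by apply/ffunP => y; rewrite d1E Om0 big1 // => b _; rewrite Om0 mul0r. Qed.

Lemma d1D m (x z : OM m.+1) : dOm_succ (x + z) = dOm_succ x + dOm_succ z.
Proof. by move: (d1_lin 1 x z); rewrite !scale1r. Qed.

Lemma d1Z m a (x : OM m.+1) : dOm_succ (a *: x) = a *: dOm_succ x.
Proof. by move: (d1_lin a x 0); rewrite d1_0 !addr0. Qed.

Lemma d1N m (x : OM m.+1) : dOm_succ (- x) = - dOm_succ x.
Proof. by rewrite -scaleN1r d1Z scaleN1r. Qed.

Lemma d1B m (x z : OM m.+1) : dOm_succ (x - z) = dOm_succ x - dOm_succ z.
Proof. by rewrite d1D d1N. Qed.

Lemma d1_sum m (I : finType) (P : pred I) (F : I -> OM m.+1) :
  dOm_succ (\sum_(i | P i) F i) = \sum_(i | P i) dOm_succ (F i).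
Proof. exact: (big_morph _ (@d1D m) (@d1_0 m)). Qed.

Definition mkAP n (s : seq V) (Hs : size s == n.+1) (Ha : allowed E s) : AP n :=
  exist _ (Tuple Hs) Ha.

Lemma sum_ps n (s : seq V) (c : R) : size s = n.+1 -> allowed E s ->
  \sum_(y : AP n) (s == ps y)%:R * c = c.
Proof.
move=> /eqP Hs Ha; rewrite (bigD1 (mkAP Hs Ha)) //= eqxx mul1r big1 ?addr0 //.
move=> y ne; case: eqP => [ey|_]; last by rewrite mul0r.
by move: ne; rewrite (@ps_inj _ _ _ y (mkAP Hs Ha)) ?eqxx.
Qed.

Lemma ddcoef m (b : AP m.+2) (a : AP m) :
  \sum_(y : AP m.+1) coef R b y * coef R y a = 0.
Proof.
set cs := fun s : seq V => \sum_(j < m.+2 | delete j s == ps a) (-1) ^+ j : R.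
have e1 : forall y : AP m.+1, coef R b y * coef R y a =
    \sum_(i < m.+3) (delete i (ps b) == ps y)%:R * ((-1) ^+ i * cs (delete i (ps b))).
  move=> y; rewrite /coef big_distrl /= big_mkcond; apply: eq_bigr => i _ /=.
  by case: eqP => [<-|_]; rewrite ?mul1r ?mul0r.
under eq_bigr => y _ do rewrite e1.
rewrite exchange_big /=.
rewrite (eq_bigr (fun i : 'I_m.+3 => (-1) ^+ i * cs (delete i (ps b)))); last first.
  move=> i _; apply: sum_ps; first by rewrite size_delete ?size_ps.
  by apply: allowed_delete; rewrite ?size_ps //; exact: (valP b).
rewrite -[RHS](dd_sum R (ps b) (ps a) m.+2) big_mkord; apply: eq_bigr => i _.
rewrite big_mkord big_distrr big_mkcond /=; apply: eq_bigr => j _.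
by case: eqP => _; rewrite ?mul1r ?mul0r ?mulr0 // exprD.
Qed.

Lemma dd0 m (x : OM m.+2) : dOm_succ (dOm_succ x) = 0.
Proof.
apply/ffunP => a; rewrite d1E Om0.
rewrite (eq_bigr (fun y => \sum_b x b * (coef R b y * coef R y a))); last first.
  by move=> y _; rewrite d1E big_distrl; apply: eq_bigr => b _; rewrite mulrA.
rewrite exchange_big big1 // => b _; rewrite -big_distrr /= (_ : \sum_i _ = 0) ?mulr0 //; exact: ddcoef.
Qed.

Lemma coef_pair0 m (p p' : MP m) : p' != p -> coef R (val p').2 (val p).1 = 0.
Proof.
move=> ne; apply/eqP; apply: contraNT ne => nz.
have e1 := cross irrE trE MF (valP p) (valP p') nz.
have e2 : (val p).2 = (val p').2.
  by apply: (up_uniq irrE trE MF (valP p)); rewrite e1; exact: (valP p').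
by apply/eqP/val_inj; case: (val p) (val p') e1 e2 => [? ?] [? ?] /= -> ->.
Qed.

Definition lam m (c : AP m.+1) (p : MP m) : R :=
  coef R c (val p).1 * (coef R (val p).2 (val p).1)^-1.
Definition pcS m (c : AP m.+1) : OM m.+1 :=
  delta c - \sum_(p : MP m) lam c p *: delta (val p).2.
Definition pc n : AP n -> OM n :=
  match n with 0 => fun c => delta c | m.+1 => fun c => pcS c end.

Lemma d1_pcS m (c : AP m.+1) y :
  dOm_succ (pcS c) y = coef R c y - \sum_(p : MP m) lam c p * coef R (val p).2 y.
Proof.
rewrite d1B d1_sum OmB OmS d1_delta; congr (_ - _).
by apply: eq_bigr => p _; rewrite d1Z OmZ d1_delta.
Qed.

Lemma lemB m (c : AP m.+1) (p : MP m) : dOm_succ (pcS c) (val p).1 = 0.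
Proof.
rewrite d1_pcS (bigD1 p) //= big1 ?addr0; last first.
  by move=> p' ne; rewrite coef_pair0 ?mulr0.
rewrite /lam mulrVK ?subrr //; have H := valP p; exact: (@coef_unit _ _ f irrE trE R _ _ _ H).
Qed.

Lemma pcSE m (c y : AP m.+1) :
  pcS c y = (y == c)%:R - \sum_(p : MP m) lam c p * (y == (val p).2)%:R.
Proof.
rewrite OmB OmS deltaE; congr (_ - _).
by apply: eq_bigr => p _; rewrite OmZ deltaE.
Qed.

Lemma pc_up n (c : AP n) (p : MP n) : critb f c -> pc c (val p).1 = 0.
Proof.
have nup : critb f c -> (val p).1 == c = false.
  case/andP=> _ nu; apply/negbTE; apply: contra nu => /eqP <-.
  by apply/existsP; exists (val p).2; exact: (valP p).
case: n c p nup => [|m] c p nup cc /=; first by rewrite deltaE nup.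
rewrite pcSE nup // big1 ?subrr // => p' _.
case: eqP => [e|_]; last by rewrite mulr0.
exfalso; apply: (no_chain irrE trE MF (valP p')); rewrite -e; exact: (valP p).
Qed.

Lemma pc_crit n (c x : AP n) : critb f x -> pc c x = (x == c)%:R.
Proof.
case: n c x => [|m] c x cx /=; first by rewrite deltaE.
rewrite pcSE big1 ?subr0 // => p _.
case: eqP => [e|_]; last by rewrite mulr0.
move: cx; rewrite /critb /= => /andP[/existsP nd _].
by exfalso; apply: nd; exists (val p).1; rewrite e; exact: (valP p).
Qed.

Lemma sum_sig (T : finType) (P : pred T) (F : T -> R) :
  \sum_(z | P z) F z = \sum_(p : {z | P z}) F (val p).
Proof.
rewrite (reindex_omap (val : {z | P z} -> T) insub) /=; last first.
  by move=> z Pz; rewrite insubT.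
by apply: eq_bigl => j; rewrite valK eqxx (valP j).
Qed.

Lemma tuple0_sum (T : finType) (F : 0.-tuple T -> R) : \sum_t F t = F [tuple].
Proof.
rewrite (bigD1 [tuple]) //= big1 ?addr0 // => t.
by case/negP; apply/eqP; exact: tuple0.
Qed.

Lemma tuple1_sum (T : finType) (F : 1.-tuple T -> R) :
  \sum_t F t = \sum_(z : T) F [tuple z].
Proof.
rewrite (reindex (fun z : T => [tuple z])) //.
exists (fun t : 1.-tuple T => thead t) => [z _|t _]; first by rewrite theadE.
case: t => [[|z [|]] //] sz; exact: val_inj.
Qed.

Lemma MC m (c : AP m.+1) (x : AP m) : critb f x ->
  dOm_succ (pcS c) x = morse_coef f R c x.
Proof.
move=> cx; rewrite d1_pcS /morse_coef.
pose G k := \sum_(t : k.-tuple (AP m * AP m.+1) |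
                   uniq (map snd t) && alt_ok f R x c None t) alt_weight R x c t.
rewrite -(big_mkord xpredT G).
have [N' eN] : exists N', #|{: AP m.+1}| = N'.+1.
  exists #|{: AP m.+1}|.-1; rewrite prednK //; apply/card_gt0P; by exists c.
rewrite eN big_nat_recl // big_nat_recl // [X in _ = _ + (_ + X)]big1_seq ?addr0; last first.
  move=> k _; rewrite /G big_pred0 // => -[s sz].
  case: s sz => [|[a1 b1] [|[a2 b2] rest]] //= _.
  apply/negbTE/negP; case/andP => _; case/and5P => _ M1 nz ne /andP[M2 _].
  have e := cross irrE trE MF M2 M1 nz.
  by rewrite e eqxx in ne.
have -> : G 0%N = coef R c x.
  rewrite /G big_mkcond tuple0_sum /=.
  by case: eqP => [->|].
have -> : G 1%N = - \sum_(p : MP m) lam c p * coef R (val p).2 x.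
  rewrite /G big_mkcond tuple1_sum -sumrN.
  rewrite -(sum_sig (fun z : AP m * AP m.+1 => Mb f z.1 z.2)
             (fun z => - (coef R c z.1 * (coef R z.2 z.1)^-1 * coef R z.2 x))).
  rewrite [RHS]big_mkcond; apply: eq_bigr => -[ai bi] _ /=.
  case Mab: (Mb f ai bi); rewrite ?andbF //=.
  have -> : (Some x != Some ai) = true.
    apply/negP => /eqP [ex]; move: cx; rewrite /critb ex => /andP[_ /existsP []].
    by exists bi.
  rewrite andbT mulNr.
  case: eqP => [->|_]; first by rewrite !mul0r oppr0.
  by case: eqP => [->|_]; rewrite ?mulr0 ?oppr0.
by [].
Qed.


Definition wK m (c : AP m.+1) : OM m :=
  dOm_succ (pcS c) - \sum_(a : Crit E f m) morse_coef f R c (val a) *: pc (val a).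

Lemma wK_nd m (c : AP m.+1) (y : AP m) : ~~ matched_down f y -> wK c y = 0.
Proof.
move=> nd; rewrite /wK OmB OmS.
case: (boolP [exists d, Mb f y d]) => [/existsP [d Myd] | nu].
  pose p : MP m := exist (fun z => Mb f z.1 z.2) (y, d) Myd.
  rewrite (_ : y = (val p).1) // lemB big1 ?subrr // => a _.
  by rewrite OmZ pc_up ?mulr0 //; exact: (valP a).
have cy : critb f y by rewrite /critb nd nu.
pose a0 : Crit E f m := exist _ y cy.
rewrite MC // (bigD1 a0) //= OmZ pc_crit // eqxx mulr1 big1 ?addr0 ?subrr // => a ne.
rewrite OmZ pc_crit //; case: eqP => [e|_]; last by rewrite mulr0.
by move: ne; rewrite (_ : a = a0) ?eqxx //; apply: val_inj.
Qed.

Lemma wK_up m (c : AP m.+2) (q : MP m) : dOm_succ (wK c) (val q).1 = 0.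
Proof.
rewrite /wK d1B dd0 // d1_sum OmB Om0 OmS big1 ?subrr // => a _.
by rewrite d1Z OmZ /= lemB mulr0.
Qed.

Lemma wK_d m (c : AP m.+2) (q : MP m) : wK c (val q).2 = 0.
Proof.
have H := wK_up c q.
rewrite d1E (bigD1 (val q).2) //= big1 ?addr0 in H; last first.
  move=> y ne; case: (boolP (matched_down f y)) => [/existsP [a May] | nd]; last first.
    by rewrite wK_nd ?mul0r.
  pose q' : MP m := exist (fun z => Mb f z.1 z.2) (a, y) May.
  rewrite (_ : y = (val q').2) // coef_pair0 ?mulr0 //.
  case: (eqVneq q' q) => [eq|//]; by move: ne; rewrite -eq eqxx.
have u := @coef_unit _ _ f irrE trE R _ _ _ (valP q).
by move/(congr1 (fun z => z * (coef R (val q).2 (val q).1)^-1)): H; rewrite mulrK // mul0r.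
Qed.

Lemma K m (c : AP m.+1) :
  dOm_succ (pcS c) = \sum_(a : Crit E f m) morse_coef f R c (val a) *: pc (val a).
Proof.
suff: wK c = 0 by move/eqP; rewrite subr_eq0 => /eqP.
apply/ffunP => y; rewrite Om0.
case: m c y => [|m] c y; first by apply: wK_nd.
case: (boolP (matched_down f y)) => [/existsP [a May] | nd]; last exact: wK_nd.
pose q : MP m := exist (fun z => Mb f z.1 z.2) (a, y) May.
by rewrite (_ : y = (val q).2) //; apply: wK_d.
Qed.


Local Notation AT := (At E f R).
Local Notation SC := (SumC E f R).

Definition topv n : AT n -> OM n :=
  match n return AT n -> OM n with
  | 0 => fun _ => 0
  | m.+1 => fun t => \sum_(p : MP m) t (inl p) *: delta (val p).2
  end.

Definition botv n (t : AT n) : OM n :=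
  \sum_(p : MP n) t (inr p) *: dOm_succ (delta (val p).2).

Definition psi n (y : SC n) : OM n :=
  \sum_(c : Crit E f n) y.1 c *: pc (val c) + topv y.2 + botv y.2.

Definition alpha n (x : OM n) (p : MP n) : R :=
  x (val p).1 * (coef R (val p).2 (val p).1)^-1.
Definition x1 n (x : OM n) : OM n :=
  x - \sum_(p : MP n) alpha x p *: dOm_succ (delta (val p).2).
Definition x2 n (x : OM n) : OM n :=
  x1 x - \sum_(c : Crit E f n) x1 x (val c) *: pc (val c).
Definition beta n : OM n -> topT E f n -> R :=
  match n return OM n -> topT E f n -> R with
  | 0 => fun _ v => match v with end
  | m.+1 => fun z (p : MP m) => z (val p).2
  end.

Definition phi n (x : OM n) : SC n :=
  ([ffun c => x1 x (val c)],
   [ffun j => match j with inl q => beta (x2 x) q | inr p => alpha x p end]).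

Lemma phi1E n (x : OM n) c : (phi x).1 c = x1 x (val c).
Proof. by rewrite ffunE. Qed.
Lemma phi2l n (x : OM n) q : (phi x).2 (inl q) = beta (x2 x) q.
Proof. by rewrite ffunE. Qed.
Lemma phi2r n (x : OM n) p : (phi x).2 (inr p) = alpha x p.
Proof. by rewrite ffunE. Qed.

Lemma MP_eq2 m (p q : MP m) : (val p).2 = (val q).2 -> p = q.
Proof.
move=> e2; have e1 : (val p).1 = (val q).1.
  by apply: (down_uniq trE MF (valP p)); rewrite e2; exact: (valP q).
by apply/val_inj; case: (val p) (val q) e1 e2 => [? ?] [? ?] /= -> ->.
Qed.

Lemma topv_up n (t : AT n) (p : MP n) : topv t (val p).1 = 0.
Proof.
case: n t p => [|m] t p /=; first by rewrite Om0.
rewrite OmS big1 // => q _; rewrite OmZ deltaE; case: eqP => [e|_]; last by rewrite mulr0.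
exfalso; apply: (no_chain irrE trE MF (valP q)); rewrite -e; exact: (valP p).
Qed.

Lemma topv_nd n (t : AT n) (y : AP n) : ~~ matched_down f y -> topv t y = 0.
Proof.
case: n t y => [|m] t y nd /=; first by rewrite Om0.
rewrite OmS big1 // => q _; rewrite OmZ deltaE; case: eqP => [e|_]; last by rewrite mulr0.
by case/negP: nd; apply/existsP; exists (val q).1; rewrite e; exact: (valP q).
Qed.

Lemma topv_d m (t : AT m.+1) (q : MP m) : topv t (val q).2 = t (inl q).
Proof.
rewrite /= OmS (bigD1 q) //= OmZ deltaE eqxx mulr1 big1 ?addr0 // => q' ne.
rewrite OmZ deltaE; case: eqP => [e|_]; last by rewrite mulr0.
by move: ne; rewrite (MP_eq2 e) eqxx.
Qed.

Lemma botv_up n (t : AT n) (p : MP n) :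
  botv t (val p).1 = t (inr p) * coef R (val p).2 (val p).1.
Proof.
rewrite /botv OmS (bigD1 p) //= OmZ d1_delta big1 ?addr0 // => p' ne.
by rewrite OmZ d1_delta coef_pair0 ?mulr0.
Qed.

Lemma x1_up n (x : OM n) (p : MP n) : x1 x (val p).1 = 0.
Proof.
rewrite /x1 OmB OmS (bigD1 p) //= OmZ d1_delta big1 ?addr0; last first.
  by move=> p' ne; rewrite OmZ d1_delta coef_pair0 ?mulr0.
rewrite /alpha mulrVK ?subrr //; exact: (@coef_unit _ _ f irrE trE R _ _ _ (valP p)).
Qed.

Lemma crit_nd n (c : Crit E f n) : ~~ matched_down f (val c).
Proof. by case/andP: (valP c). Qed.

Lemma x2_nd n (x : OM n) (y : AP n) : ~~ matched_down f y -> x2 x y = 0.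
Proof.
move=> nd; rewrite /x2 OmB OmS.
case: (boolP [exists d, Mb f y d]) => [/existsP [d Myd] | nu].
  pose p : MP n := exist (fun z => Mb f z.1 z.2) (y, d) Myd.
  rewrite (_ : y = (val p).1) // x1_up big1 ?subrr // => a _.
  by rewrite OmZ pc_up ?mulr0 //; exact: (valP a).
have cy : critb f y by rewrite /critb nd nu.
pose a0 : Crit E f n := exist _ y cy.
rewrite (bigD1 a0) //= OmZ pc_crit // eqxx mulr1 big1 ?addr0 ?subrr // => a ne.
rewrite OmZ pc_crit //; case: eqP => [e|_]; last by rewrite mulr0.
by move: ne; rewrite (_ : a = a0) ?eqxx //; apply: val_inj.
Qed.

Lemma topv_x2 n (x : OM n) : topv (phi x).2 = x2 x.
Proof.
apply/ffunP => y; case: (boolP (matched_down f y)) => [md | nd]; last first.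
  by rewrite topv_nd // x2_nd.
case: n x y md => [|m] x y md //.
case/existsP: md => a May.
pose q : MP m := exist (fun z => Mb f z.1 z.2) (a, y) May.
by rewrite (_ : y = (val q).2) // topv_d phi2l.
Qed.

Lemma psi_phi n (x : OM n) : psi (phi x) = x.
Proof.
rewrite /psi topv_x2.
have e1 : \sum_(c : Crit E f n) (phi x).1 c *: pc (val c) = x1 x - x2 x.
  rewrite /x2 opprB addrC subrK; apply: eq_bigr => c _; by rewrite phi1E.
have e2 : botv (phi x).2 = x - x1 x.
  rewrite /x1 opprB addrC subrK /botv; apply: eq_bigr => p _; by rewrite phi2r.
by rewrite e1 e2 subrK addrC subrK.
Qed.

Lemma beta_topv n (t : AT n) (q : topT E f n) : beta (topv t) q = t (inl q).
Proof. by case: n t q => [|m] t q //=; rewrite topv_d. Qed.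

Lemma phi_psi n (y : SC n) : phi (psi y) = y.
Proof.
have ea : forall p, alpha (psi y) p = y.2 (inr p).
  move=> p; rewrite /alpha /psi !OmD OmS big1 ?add0r; last first.
    by move=> c _; rewrite OmZ pc_up ?mulr0 //; exact: (valP c).
  rewrite topv_up add0r botv_up mulrK //.
  exact: (@coef_unit _ _ f irrE trE R _ _ _ (valP p)).
have ex1 : x1 (psi y) = \sum_(c : Crit E f n) y.1 c *: pc (val c) + topv y.2.
  rewrite /x1; under eq_bigr => p _ do rewrite ea.
  by rewrite /psi /botv addrK.
have eg : forall c : Crit E f n, x1 (psi y) (val c) = y.1 c.
  move=> c; rewrite ex1 OmD OmS topv_nd ?crit_nd // addr0.
  rewrite (bigD1 c) //= OmZ pc_crit ?eqxx ?mulr1; last exact: (valP c).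
  rewrite big1 ?addr0 // => a ne; rewrite OmZ pc_crit; last exact: (valP c).
  case: eqP => [e|_]; last by rewrite mulr0.
  by move: ne; rewrite (val_inj e) eqxx.
have ex2 : x2 (psi y) = topv y.2.
  rewrite /x2; under eq_bigr => c _ do rewrite eg.
  by rewrite ex1 addrC addKr.
apply: injective_projections => /=; apply/ffunP.
  by move=> c; rewrite ffunE eg.
by case=> [q|p]; rewrite ffunE /= ?ea // ex2 beta_topv.
Qed.


Lemma ffD (I : finType) (t u : {ffun I -> R^o}) j : (t + u) j = t j + u j.
Proof. by rewrite ffunE. Qed.
Lemma ffZ (I : finType) a (t : {ffun I -> R^o}) j : (a *: t) j = a * t j.
Proof. by rewrite ffunE. Qed.
Lemma ff0 (I : finType) j : (0 : {ffun I -> R^o}) j = 0.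
Proof. by rewrite ffunE. Qed.

Lemma scale_sum (I : finType) n (G : I -> OM n) (u v : I -> R) a :
  \sum_i (a * u i + v i) *: G i = a *: \sum_i u i *: G i + \sum_i v i *: G i.
Proof.
by rewrite scaler_sumr -big_split; apply: eq_bigr => i _ /=; rewrite scalerDl scalerA.
Qed.

Lemma topv_lin n a (t u : AT n) : topv (a *: t + u) = a *: topv t + topv u.
Proof.
case: n t u => [|m] t u /=; first by rewrite scaler0 addr0.
rewrite -scale_sum; apply: eq_bigr => p _; by rewrite ffD ffZ.
Qed.

Lemma botv_lin n a (t u : AT n) : botv (a *: t + u) = a *: botv t + botv u.
Proof. rewrite /botv -scale_sum; apply: eq_bigr => p _; by rewrite ffD ffZ. Qed.

Lemma psi_lin n a (y z : SC n) : psi (a *: y + z) = a *: psi y + psi z.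
Proof.
rewrite /psi /= topv_lin botv_lin.
rewrite (_ : \sum_(c : Crit E f n) (a *: y.1 + z.1) c *: pc (val c) =
   a *: \sum_(c : Crit E f n) y.1 c *: pc (val c) + \sum_(c : Crit E f n) z.1 c *: pc (val c)).
  by rewrite !scalerDr [X in X + _ = _]addrACA [LHS]addrACA.
rewrite -scale_sum; apply: eq_bigr => c _; by rewrite ffD ffZ.
Qed.

Lemma psi00 n : psi (0 : SC n) = 0.
Proof.
have := psi_lin 1 (0 : SC n) 0; rewrite scaler0 addr0 scale1r => H.
by apply: (@addrI _ (psi 0)); rewrite addr0 -H.
Qed.

Lemma pcSucc m (c : AP m.+1) : pc c = pcS c.
Proof. by []. Qed.

Lemma topv_dAt m (t : AT m.+1) : topv (dAt_succ t) = 0.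
Proof. case: m t => [|m] t //=; rewrite big1 // => p _; by rewrite ffunE /= scale0r. Qed.

Lemma botv_dAt m (t : AT m.+1) :
  botv (dAt_succ t) = \sum_(p : MP m) t (inl p) *: dOm_succ (delta (val p).2).
Proof. rewrite /botv; apply: eq_bigr => p _; by rewrite ffunE. Qed.

Lemma psi_d n (y : SC n) : dOm (psi y) = psi (dSum y).
Proof.
case: n y => [|m] y.
  rewrite /= (_ : dSum y = 0) ?psi00 //.
change (dOm_succ (psi y) = psi (CM_succ_d y.1, dAt_succ y.2)).
rewrite /psi !d1D d1_sum /= topv_dAt addr0.
have eT : dOm_succ (topv y.2) = botv (dAt_succ y.2).
  rewrite botv_dAt /= d1_sum; apply: eq_bigr => p _; by rewrite d1Z.
have eB : dOm_succ (botv y.2) = 0.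
  rewrite /botv d1_sum big1 // => p _; by rewrite d1Z dd0 // scaler0.
rewrite eT eB addr0; congr (_ + _).
under eq_bigr => c _ do rewrite d1Z ?pcSucc K scaler_sumr.
rewrite exchange_big; apply: eq_bigr => a _; rewrite ffunE scaler_suml.
by apply: eq_bigr => c _; rewrite scalerA.
Qed.

Lemma phi_lin n a (x y : OM n) : phi (a *: x + y) = a *: phi x + phi y.
Proof.
have := phi_psi (a *: phi x + phi y); rewrite psi_lin !psi_phi => <-.
by [].
Qed.

Lemma phi_d n (x : OM n) : phi (dOm x) = dSum (phi x).
Proof.
have := psi_d (phi x); rewrite psi_phi => ->.
exact: phi_psi.
Qed.

Lemma phi0 n : phi (0 : OM n) = 0.
Proof. by have := phi_psi (0 : SC n); rewrite psi00. Qed.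

Lemma dCM0 n : dCM (0 : CM E f R n) = 0.
Proof.
case: n => [|n] //=; apply/ffunP => a; rewrite !ffunE big1 // => b _.
by rewrite ffunE mul0r.
Qed.

Lemma dAt0 n : dAt (0 : AT n) = 0.
Proof. by case: n => [|n] //=; apply/ffunP => -[q|p]; rewrite !ffunE. Qed.

Lemma dAt_exact n (t : AT n) : dAt t = 0 -> forall q, t (inl q) = 0.
Proof.
case: n t => [|m] t dt q; first by case: q.
by have := congr1 (fun u : AT m => u (inr q)) dt; rewrite !ffunE.
Qed.

Lemma iso : complex_iso (C:=OmC E R) (D:=SumC E f R) (@dOm V E R) (@dSum V E f R).
Proof.
exists phi; split; first exact: phi_lin.
split; last exact: phi_d.
by move=> n; exists (@psi n); [exact: psi_phi | exact: phi_psi].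
Qed.

Lemma hom n : homology_iso (C:=OmC E R) (D:=CMC E f R) (@dOm V E R) (@dCM V E f R) n.
Proof.
exists (fun x => (phi x).1); split.
  move=> x; rewrite /cycle_ => cx.
  by have := phi_d x; rewrite cx phi0 => /(congr1 fst) /= <-.
split.
  move=> x y _ _; exists 0; rewrite dCM0.
  by have := phi_lin 1 x y; rewrite !scale1r => ->; rewrite /= subrr.
split.
  move=> a x _; exists 0; rewrite dCM0.
  by have := phi_lin a x 0; rewrite addr0 phi0 addr0 => ->; rewrite /= subrr.
split.
  move=> x cx; split.
    by case=> y <-; exists (phi y).1; exact: esym (congr1 fst (phi_d y)).
  case=> z ez.
  have dt : dAt (phi x).2 = 0.
    by have := phi_d x; rewrite /cycle_ in cx; rewrite cx phi0 => /(congr1 snd) /= <-.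
  pose s : AT n.+1 := [ffun j => match j with inl p => (phi x).2 (inr p) | inr _ => 0 end].
  exists (psi (z, s)); rewrite psi_d.
  have -> : dSum ((z, s) : SC n.+1) = phi x.
    apply: injective_projections => /=; first exact: ez.
    apply/ffunP => -[q|p]; rewrite !ffunE //=.
    by rewrite -phi2l (dAt_exact dt).
  exact: psi_phi.
move=> y cy; exists (psi ((y, 0) : SC n)).
  rewrite /cycle_ psi_d (_ : dSum _ = 0) ?psi00 //.
  apply: injective_projections => /=; first exact: cy.
  exact: dAt0.
rewrite phi_psi /= subrr; exists 0; exact: dCM0.
Qed.

End Lin.

Unset Implicit Arguments.

Theorem theorem1p1 (R : comUnitRingType) (V : finType) (E : rel V)
    (f : V -> Real) :
  irreflexive E -> transitive E ->
  (forall v, 0 <= f v) -> MorseFn E f ->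
  complex_iso (C:=OmC E R) (D:=SumC E f R) (@dOm V E R) (@dSum V E f R) /\
  (forall n : nat,
     homology_iso (C:=OmC E R) (D:=CMC E f R) (@dOm V E R) (@dCM V E f R) n).
Proof.
move=> irrE trE _ MF; split; first exact: iso.
by move=> n; apply: hom.
Qed.
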